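(* Let $X$ be a Banach space, $T$ a nonempty index set, and $f_t:X\to\mathbb{R}\cup\{+\infty\}$ $(t\in T)$ functions that are lower semicontinuous with respect to the weak topology of $X$. Suppose that either all $f_t$ $(t\in T)$ are nonnegative, or $T$ is finite. Then the collection $\{f_t\}_{t\in T}$ is uniformly lower semicontinuous on every weakly compact subset $U$ of $X$, i.e., $\inf_{x\in U}\big(\overline{\sum_{t\in T}}f_t\big)(x)\le \Lambda_U(\{f_t\}_{t\in T})$.
   Context: Let $\mathcal{F}(T)$ be the family of finite subsets of $T$, directed by inclusion. For a net $\{\alpha_S\}_{S\in\mathcal{F}(T)}\subset[-\infty,+\infty]$: $\limsup_{S\uparrow T,|S|<\infty}\alpha_S:=\inf_{S_0\in\mathcal{F}(T)}\sup_{S\in\mathcal{F}(T),S_0\subset S}\alpha_S$ and $\liminf_{S\uparrow T,|S|<\infty}\alpha_S:=\sup_{S_0\in\mathcal{F}(T)}\inf_{S\in\mathcal{F}(T),S_0\subset S}\alpha_S$. The infinite sum is $\big(\overline{\sum_{t\in T}} f_t\big)(x):=\limsup_{S\uparrow T,|S|<\infty}\sum_{t\in S}f_t(x)$. For $U\subset X$, the uniform infimum is $\Lambda_U(\{f_t\}_{t\in T}):=\liminf_{S\uparrow T,|S|<\infty}\ \liminf_{\operatorname{diam}\{x_t\}_{t\in S}\to 0,\ x_t\in U\,(t\in S)}\ \sum_{t\in S}f_t(x_t)$, where the inner lower limit equals $\lim_{\delta\downarrow0}\inf\{\sum_{t\in S}f_t(x_t): x_t\in U\ (t\in S),\ \operatorname{diam}\{x_t\}_{t\in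 S}<\delta\}$ and $\operatorname{diam} A=\sup_{a,b\in A}\|a-b\|$. The collection is called uniformly lower semicontinuous on $U$ if $\inf_U\overline{\sum_{t\in T}}f_t\le\Lambda_U(\{f_t\}_{t\in T})$. Convention: $\inf\emptyset=+\infty$. *)

(* Defs.v *)
From HB Require Import structures.
From mathcomp Require Import all_boot all_order all_algebra.
From mathcomp Require Import all_classical all_reals all_analysis.
Set Implicit Arguments. Unset Strict Implicit. Unset Printing Implicit Defensive.
Import Order.TTheory GRing.Theory Num.Theory.
Import numFieldNormedType.Exports.
Local Open Scope classical_set_scope.
Local Open Scope ring_scope.

Section Defs.
Context {R : realType} {X : normedModType R}.

Definition dual_elt (phi : X -> R) : Prop :=
  (forall x y, phi (x + y) = phi x + phi y) /\
  (forall (a : R) x, phi (a *: x) = a * phi x) /\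
  continuous phi.

(* open sets of the weak topology sigma(X, dual X), via its standard base *)
Definition weakly_open (V : set X) : Prop :=
  forall x, V x -> exists (n : nat) (phi : 'I_n -> X -> R) (e : R),
    [/\ (forall i, dual_elt (phi i)), 0 < e &
        [set y | forall i, `|phi i y - phi i x| < e] `<=` V].

Definition weakly_compact (K : set X) : Prop :=
  forall (I : Type) (G : I -> set X),
    (forall i, weakly_open (G i)) -> K `<=` \bigcup_i G i ->
    exists (n : nat) (g : 'I_n -> I), K `<=` \bigcup_j G (g j).

Definition weakly_lsc (f : X -> \bar R) : Prop :=
  forall c : R, weakly_open [set y | (c%:E < f y)%E].

Definition diam (A : set X) : \bar R :=
  ereal_sup [set (`|a - b|)%:E | a in A & b in A].
End Defs.

Section Nets.
Context {R : realType} {T : choiceType}.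

(* limsup / liminf of a net indexed by finite subsets of T directed by inclusion *)
Definition fin_limsup (a : set T -> \bar R) : \bar R :=
  ereal_inf [set ereal_sup [set a S | S in [set S | finite_set S /\ S0 `<=` S]]
            | S0 in [set S0 : set T | finite_set S0]].

Definition fin_liminf (a : set T -> \bar R) : \bar R :=
  ereal_sup [set ereal_inf [set a S | S in [set S | finite_set S /\ S0 `<=` S]]
            | S0 in [set S0 : set T | finite_set S0]].
End Nets.

Section Sums.
Context {R : realType} {X : normedModType R} {T : choiceType}.
Variable f : T -> X -> \bar R.

Definition infsum (x : X) : \bar R :=
  fin_limsup (fun S : set T => (\sum_(t \in S) f t x)%E).

(* lim_{delta -> 0+} inf { sum_{t in S} f_t(x_t) : x_t in U, diam {x_t} < delta };
   the inner infimum is nonincreasing in delta, so the limit is the supremum over delta > 0 *)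
Definition inner_liminf (U : set X) (S : set T) : \bar R :=
  ereal_sup [set ereal_inf
      [set (\sum_(t \in S) f t (xs t))%E
       | xs in [set xs : T -> X | (forall t, S t -> U (xs t)) /\
                                   (diam (xs @` S) < delta%:E)%E]]
    | delta in [set delta : R | 0 < delta]].

Definition Lambda (U : set X) : \bar R := fin_liminf (inner_liminf U).

Definition uniformly_lsc (U : set X) : Prop :=
  (ereal_inf [set infsum x | x in U] <= Lambda U)%E.
End Sums.

(* Main.v *)
Require Import Defs.
From HB Require Import structures.
From mathcomp Require Import all_boot all_order all_algebra.
From mathcomp Require Import all_classical all_reals all_analysis.
From mathcomp Require Import zify ring lra.
Import Order.TTheory GRing.Theory Num.Theory.
Import numFieldNormedType.Exports.
Local Open Scope classical_set_scope.
Local Open Scope ring_scope.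

Section Aux.
Context {R : realType} {X : normedModType R}.

Definition Gd (n : nat) (phi : nat -> X -> R) := forall i, (i < n)%N -> dual_elt (phi i).
Definition WN (n : nat) (phi : nat -> X -> R) (e : R) (x y : X) :=
  forall i, (i < n)%N -> `|phi i y - phi i x| < e.

Lemma fmax (n : nat) (a : nat -> R) (e : R) :
  (forall i, (i < n)%N -> a i < e) ->
  exists M, M < e /\ forall i, (i < n)%N -> a i <= M.
Proof.
elim: n => [|n IH] H.
  by exists (e - 1); split => //; lra.
have [M [Me HM]] : exists M, M < e /\ forall i, (i < n)%N -> a i <= M.
  by apply: IH => i Hi; apply: H; lia.
exists (Num.max M (a n)); split.
  by rewrite gt_max Me H.
move=> i; rewrite ltnS leq_eqVlt => /orP[/eqP->|Hi]; rewrite le_max ?lexx ?orbT //.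
by rewrite HM.
Qed.

Lemma fmin (n : nat) (P : nat -> R -> Prop) :
  (forall i a b, 0 < a -> a <= b -> P i b -> P i a) ->
  (forall i, (i < n)%N -> exists2 eta, 0 < eta & P i eta) ->
  exists2 eta, 0 < eta & forall i, (i < n)%N -> P i eta.
Proof.
move=> Pm; elim: n => [|n IH] H.
  by exists 1.
have [eta He HP] : exists2 eta, 0 < eta & forall i, (i < n)%N -> P i eta.
  by apply: IH => i Hi; apply: H; lia.
have [eta' He' HP'] := H n (ltnSn n).
exists (Num.min eta eta'); first by rewrite lt_min He He'.
move=> i; rewrite ltnS leq_eqVlt => /orP[/eqP->|Hi].
  by apply: Pm HP'; rewrite ?lt_min ?He ?He' // ge_min lexx orbT.
by apply: Pm (HP i Hi); rewrite ?lt_min ?He ?He' // ge_min lexx.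
Qed.

Lemma dual0 (phi : X -> R) : dual_elt phi -> phi 0 = 0.
Proof.
move=> [_ [Hs _]]; have := Hs 0 0; rewrite scale0r mul0r; done.
Qed.

Lemma dualB (phi : X -> R) a b : dual_elt phi -> phi a - phi b = phi (a - b).
Proof.
move=> [Ha [Hs _]]; have := Ha b (a - b); rewrite addrC subrK => ->.
by rewrite addrC addKr.
Qed.

Lemma gauge_unif n (phi : nat -> X -> R) e : Gd n phi -> 0 < e ->
  exists2 eta, 0 < eta & forall i, (i < n)%N -> forall z : X, `|z| < eta -> `|phi i z| < e.
Proof.
move=> Hd He; apply: fmin.
  by move=> i a b a0 ab Hb z za; apply: Hb; apply: lt_le_trans ab.
move=> i Hi; have Hdi := Hd i Hi; case: (Hdi) => [_ [_ Hc]].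
have := Hc 0; move/cvgrPdist_lt => /(_ e He) /nbhs_normP [r r0 Hr].
exists r => // z zr; have := Hr z; rewrite /ball_ /= sub0r normrN => /(_ zr).
by rewrite dual0 // sub0r normrN.
Qed.

Lemma wo_gauge (V : set X) x : weakly_open V -> V x ->
  exists n phi e, [/\ Gd n phi, 0 < e & forall y, WN n phi e x y -> V y].
Proof.
move=> HV Vx; have [n [phi [e [Hd He Hs]]]] := HV x Vx.
exists n, (fun k => if @insub _ (fun k => (k < n)%N) 'I_n k is Some i then phi i else (fun _ => 0)), e.
split => //.
  by move=> k kn; rewrite (insubT (fun k => (k < n)%N) kn).
move=> y Hy; apply: Hs => i /=; have := Hy (val i) (ltn_ord i).
by rewrite valK.
Qed.

Lemma gauge_wo n (phi : nat -> X -> R) e x : Gd n phi -> weakly_open [set y | WN n phi e x y].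
Proof.
move=> Hd y Hy.
have [M [Me HM]] := @fmax n (fun i => `|phi i y - phi i x|) e Hy.
exists n, (fun i : 'I_n => phi i), (e - M); split.
- by move=> i; apply: Hd.
- by rewrite subr_gt0.
- move=> z Hz k kn /=; have := Hz (Ordinal kn) => /= H1.
  have H2 := HM k kn.
  apply: (le_lt_trans (ler_distD (phi k y) _ _)).
  lra.
Qed.

Lemma gauge_inter n1 (phi1 : nat -> X -> R) e1 n2 phi2 e2 :
  Gd n1 phi1 -> Gd n2 phi2 -> 0 < e1 -> 0 < e2 ->
  exists n phi e, [/\ Gd n phi, 0 < e &
    forall x y, WN n phi e x y -> WN n1 phi1 e1 x y /\ WN n2 phi2 e2 x y].
Proof.
move=> H1 H2 e10 e20.
exists (n1 + n2)%N, (fun k => if (k < n1)%N then phi1 k else phi2 (k - n1)%N), (Num.min e1 e2); split.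
- move=> k kn; case: ifP => h; [exact: H1| apply: H2; lia].
- by rewrite lt_min e10 e20.
- move=> x y H; split => i Hi.
  + by have := H i ltac:(lia); rewrite Hi lt_min => /andP[].
  + have := H (n1 + i)%N ltac:(lia); rewrite ifF ?addKn ?lt_min; [by move=>/andP[]| lia].
Qed.

Lemma gauge_to_wo n (phi : nat -> X -> R) e x (V : set X) : Gd n phi -> 0 < e ->
  (forall y, WN n phi e x y -> V y) ->
  exists (n : nat) (phi : 'I_n -> X -> R) (e : R),
    [/\ (forall i, dual_elt (phi i)), 0 < e &
        [set y | forall i, `|phi i y - phi i x| < e] `<=` V].
Proof.
move=> Hd He Hs; exists n, (fun i : 'I_n => phi i), e; split => //.
- by move=> i; apply: Hd.
- by move=> y Hy; apply: Hs => k kn; exact: (Hy (Ordinal kn)).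
Qed.
End Aux.

Section Aux2.
Context {R : realType}.

Lemma esplit (u v : \bar R) (c : R) : (c%:E < u + v)%E ->
  exists a b : R, [/\ (a%:E < u)%E, (b%:E < v)%E & c <= a + b].
Proof.
case: u => [r| |]; case: v => [s| |] => H; rewrite /= ?lte_fin ?ltNge ?leNye // in H.
- exists (r - (r + s - c) / 2), (s - (r + s - c) / 2); rewrite !lte_fin; split; lra.
- exists (r - 1), (c - r + 1); rewrite !lte_fin ?ltry; split => //; lra.
- exists (c - s + 1), (s - 1); rewrite !lte_fin ?ltry; split => //; lra.
- by exists 0, c; rewrite ?ltry; split => //; lra.
Qed.

Lemma le_via_reals (x y : \bar R) : (forall r : R, (r%:E < x)%E -> (r%:E <= y)%E) -> (x <= y)%E.
Proof.
case: x => [r| |] H; case: y H => [s| |] H //=; rewrite ?leey ?leNye //.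
- rewrite lee_fin; apply/ler_addgt0Pr => e e0; have := H (r - e); rewrite !lte_fin lee_fin.
  by move=> /(_ ltac:(lra)); lra.
- by have := H (r - 1); rewrite lte_fin => /(_ ltac:(lra)); rewrite leeNy_eq.
- have := H (s + 1); rewrite ltry lee_fin => /(_ isT) h; exfalso; lra.
- by have := H 0; rewrite ltry leeNy_eq => /(_ isT).
Qed.
End Aux2.

Section Aux3.
Context {R : realType} {X : normedModType R} {T : choiceType}.
Variable f : T -> X -> \bar R.
Hypothesis lsc : forall t, weakly_lsc (f t).

Lemma Qseq (s : seq T) (c : R) (x : X) :
  (c%:E < (\sum_(t <- s) f t x)%E)%E ->
  exists n phi e, [/\ Gd n phi, 0 < e & forall ys : T -> X,
    (forall t, t \in s -> WN n phi e x (ys t)) -> (c%:E < (\sum_(t <- s) f t (ys t))%E)%E].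
Proof.
elim: s c => [|t0 s IH] c.
  rewrite big_nil => H; exists 0%N, (fun _ _ => 0), 1; split => //.
  by move=> ys _; rewrite big_nil.
rewrite big_cons => /esplit [a [b [Ha Hb Hab]]].
have [n1 [phi1 [e1 [Hd1 He1 Hs1]]]] := wo_gauge _ _ (lsc t0 a) Ha.
have [n2 [phi2 [e2 [Hd2 He2 Hs2]]]] := IH b Hb.
have [n [phi [e [Hd He Hs]]]] := gauge_inter _ _ _ _ _ _ Hd1 Hd2 He1 He2.
exists n, phi, e; split => // ys Hys; rewrite big_cons.
have h1 : (a%:E < f t0 (ys t0))%E.
  by apply: Hs1; exact: (Hs _ _ (Hys t0 (mem_head _ _))).1.
have h2 : (b%:E < (\sum_(t <- s) f t (ys t))%E)%E.
  apply: Hs2 => t ts; apply: (Hs _ _ (Hys t _)).2.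
  by rewrite inE ts orbT.
apply: (le_lt_trans _ (lteD h1 h2)); by rewrite -EFinD lee_fin.
Qed.

Lemma L2 (S : set T) (c : R) : finite_set S ->
  weakly_open [set y | (c%:E < \sum_(t \in S) f t y)%E].
Proof.
move=> fS x; rewrite /= fsbig_finite // => Hx.
have [n [phi [e [Hd He Hs]]]] := Qseq _ _ _ Hx.
apply: (gauge_to_wo _ _ _ _ _ Hd He) => y Hy; rewrite /= fsbig_finite //.
exact: (Hs (fun _ => y) (fun t _ => Hy)).
Qed.

Lemma L1 (U : set X) (S : set T) : weakly_compact U -> finite_set S -> S !=set0 ->
  (ereal_inf [set \sum_(t \in S) f t x | x in U] <= inner_liminf f U S)%E.
Proof.
move=> cU fS [t0 St0]; apply: le_via_reals => c Hc.
have Hpos : forall x, U x -> (c%:E < (\sum_(t <- finmap.enum_fset (fset_set S)) f t x)%E)%E.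
  move=> x Ux; rewrite -fsbig_finite //; apply: lt_le_trans Hc _.
  by apply: ereal_inf_lbound; exists x.
have : forall x, exists p : nat * (nat -> X -> R) * R, U x ->
   [/\ Gd p.1.1 p.1.2, 0 < p.2 & forall ys : T -> X,
     (forall t, t \in finmap.enum_fset (fset_set S) -> WN p.1.1 p.1.2 p.2 x (ys t)) ->
     (c%:E < (\sum_(t <- finmap.enum_fset (fset_set S)) f t (ys t))%E)%E].
  move=> x; case: (pselect (U x)) => Ux.
    by have [n [phi [e H]]] := Qseq _ _ _ (Hpos x Ux); exists (n, phi, e).
  by exists (0%N, fun _ _ => 0, 1).
move=> /choice [P HP].
pose G := fun x => [set y | U x /\ WN (P x).1.1 (P x).1.2 ((P x).2 / 2) x y].
have Gopen : forall x, weakly_open (G x).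
  move=> x y [Ux Hy]; have [Hd He _] := HP x Ux.
  have [n [phi [e [A B C]]]] := gauge_wo _ _ ((P x).2 / 2) x Hd y Hy.
  by exists n, phi, e; split => // z Hz; split => //; exact: C.
have cover : U `<=` \bigcup_x G x.
  move=> x Ux; exists x => //; split => // i _; rewrite subrr normr0.
  by have [_ He _] := HP x Ux; rewrite divr_gt0.
have [k [g Hg]] := cU _ G Gopen cover.
have [eta eta0 Heta] : exists2 eta, 0 < eta & forall j : 'I_k, U (g j) ->
    forall i, (i < (P (g j)).1.1)%N -> forall z : X, `|z| < eta ->
    `|(P (g j)).1.2 i z| < (P (g j)).2 / 2.
  pose Q := (fun j eta => forall jk : (j < k)%N, U (g (Ordinal jk)) ->
    forall i, (i < (P (g (Ordinal jk))).1.1)%N -> forall z : X, `|z| < eta ->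
    `|(P (g (Ordinal jk))).1.2 i z| < (P (g (Ordinal jk))).2 / 2).
  have Hmono : forall i a b, 0 < a -> a <= b -> Q i b -> Q i a.
    move=> j a b a0 ab Hb jk Uj i Hi z za.
    exact: (Hb jk Uj i Hi z (lt_le_trans za ab)).
  have Hex : forall j, (j < k)%N -> exists2 eta, 0 < eta & Q j eta.
    move=> j jk; case: (pselect (U (g (Ordinal jk)))) => Uj.
      have [Hd He _] := HP _ Uj.
      have [eta e0 Heta] := gauge_unif _ _ _ Hd (divr_gt0 He (ltr0Sn _ 1)).
      exists eta => // jk' Uj' i Hi z zn.
      have E : jk' = jk by apply: Prop_irrelevance.
      by subst jk'; apply: Heta.
    by exists 1 => // jk' Uj'; exfalso; apply: Uj; have -> : jk = jk' by apply: Prop_irrelevance.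
  have [eta eta0 H] := @fmin R k Q Hmono Hex.
  exists eta => //; case=> j jk Uj; exact: (H j jk jk Uj).
rewrite /inner_liminf; apply: le_ereal_sup_tmp; eexists; first by exists eta.
apply: le_ereal_inf_tmp => _ [xs [Hxs Hdiam] <-].
have Ux0 := Hxs t0 St0.
have [j _ [Ugj Hw]] := Hg _ Ux0.
have [Hd He Hs] := HP _ Ugj.
rewrite fsbig_finite //; apply/ltW; apply: Hs => t; rewrite in_fset_set // inE => St i Hi.
have h1 : `|(P (g j)).1.2 i (xs t) - (P (g j)).1.2 i (xs t0)| < (P (g j)).2 / 2.
  rewrite (dualB _ _ _ (Hd i Hi)); apply: Heta => //.
  have : ((`|xs t - xs t0|)%:E <= diam (xs @` S))%E.
    apply: ereal_sup_ubound; exists (xs t); first by exists t.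
    by exists (xs t0); first by exists t0.
  by move=> /le_lt_trans /(_ Hdiam); rewrite lte_fin.
have h2 := Hw i Hi.
apply: (le_lt_trans (ler_distD ((P (g j)).1.2 i (xs t0)) _ _)); lra.
Qed.
End Aux3.

Theorem proposition2p3 (R : realType) (X : completeNormedModType R)
  (T : choiceType) (f : T -> X -> \bar R) :
  [set: T] !=set0 ->
  (forall t x, f t x != -oo%E) ->
  (forall t, weakly_lsc (f t)) ->
  ((forall t x, (0 <= f t x)%E) \/ finite_set [set: T]) ->
  forall U : set X, weakly_compact U -> uniformly_lsc f U.
Proof.
move=> [t0 _] _ lsc Hcase U cU; rewrite /uniformly_lsc.
case: Hcase => [f0|fT].
- apply: le_via_reals => c Hc; rewrite leNgt; apply/negP => HL.
  have mono : forall (A B : set T) x, finite_set A -> finite_set B -> A `<=` B ->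
      ((\sum_(t \in A) f t x) <= (\sum_(t \in B) f t x))%E.
    move=> A B x fA fB AB; apply: lee_fsum_nneg_subset => //.
      by move=> t; rewrite !inE => h; apply: AB.
  have P1 : forall S0, finite_set S0 -> exists2 x, U x & ((\sum_(t \in S0) f t x) < c%:E)%E.
    move=> S0 fS0; pose S1 := S0 `|` [set t0].
    have fS1 : finite_set S1 by rewrite finite_setU; split => //; exact: finite_set1.
    have : (ereal_inf [set inner_liminf f U S | S in [set S | finite_set S /\ S1 `<=` S]] < c%:E)%E.
      apply: le_lt_trans HL; rewrite /Lambda /fin_liminf.
      by apply: ereal_sup_ubound; exists S1.
    move=> /ereal_inf_lt [_ [S [fS S1S] <-] HS].
    have St0 : S !=set0 by exists t0; apply: S1S; right.
    have := le_lt_trans (@L1 _ _ _ f lsc U S cU fS St0) HS => /ereal_inf_lt [_ [x Ux <-] Hx].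
    exists x => //; apply: le_lt_trans Hx; apply: mono => //.
    by move=> t h; apply: S1S; left.
  have [x Ux Hx] : exists2 x, U x & forall S, finite_set S -> ((\sum_(t \in S) f t x) <= c%:E)%E.
    case: (pselect (exists2 x, U x & forall S, finite_set S -> ((\sum_(t \in S) f t x) <= c%:E)%E)) => // Hn.
    exfalso.
    have Hcov : forall x, U x -> exists S : {S : set T | finite_set S}, (c%:E < \sum_(t \in sval S) f t x)%E.
      move=> x Ux; apply: contrapT => H'; apply: Hn; exists x => // S fS.
      rewrite leNgt; apply/negP => h; apply: H'; by exists (exist _ S fS).
    pose G := fun S : {S : set T | finite_set S} => [set y | (c%:E < \sum_(t \in sval S) f t y)%E].
    have Gop : forall S, weakly_open (G S) by move=> [S fS]; exact: (@L2 _ _ _ f lsc S c fS).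
    have cov : U `<=` \bigcup_S G S by move=> x Ux; have [S h] := Hcov x Ux; exists S.
    have [k [gS Hg]] := cU _ G Gop cov.
    pose Ss := \bigcup_(j in [set: 'I_k]) sval (gS j).
    have fSs : finite_set Ss by apply: bigcup_finite; [exact: finite_finset| move=> j _; exact: (svalP (gS j))].
    have [x Ux Hx] := P1 Ss fSs.
    have [j _ Hj] := Hg x Ux.
    have := lt_le_trans Hj (mono _ _ x (svalP (gS j)) fSs (fun t h => ltac:(by exists j))).
    by move=> /lt_trans /(_ Hx); rewrite ltxx.
  have : (ereal_inf [set infsum f x | x in U] <= c%:E)%E.
    apply: le_trans (ereal_inf_lbound _) _; first by exists x.
    rewrite /infsum /fin_limsup; apply: ge_ereal_inf; eexists; first by exists set0 => //; exact: finite_set0.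
    by apply: ge_ereal_sup => _ [S [fS _] <-]; exact: Hx S fS.
  by move=> /(lt_le_trans Hc); rewrite ltxx.
- have T0 : [set: T] !=set0 by exists t0.
  rewrite /Lambda /fin_liminf; apply: le_ereal_sup_tmp; eexists; first by exists setT.
  apply: le_ereal_inf_tmp => _ [S [fS TS] <-].
  have -> : S = setT by apply/seteqP; split.
  apply: le_trans (@L1 _ _ _ f lsc U setT cU fT T0).
  apply: le_ereal_inf_tmp => _ [x Ux <-].
  apply: le_trans (ereal_inf_lbound _) _; first by exists x.
  rewrite /infsum /fin_limsup; apply: ge_ereal_inf; eexists; first by exists setT.
  apply: ge_ereal_sup => _ [S' [_ TS'] <-].
  have -> : S' = setT by apply/seteqP; split.
  by [].
Qed.
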